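(* If a spectrahedral cone $K\subseteq\mathbb{R}^n$ contains the positive orthant $\mathbb{R}_+^n$, then $K$ admits a normalized spectrahedral representation.
   Context: For real symmetric $k\times k$ matrices $C=\{C_i\}_{i\in[n]}$, $K_C=\{x\in\mathbb{R}^n:\sum_iC_ix_i\succeq0\}$; $C$ is a spectrahedral representation of $K_C$, and a cone of this form is spectrahedral. A representation $K=\{x:\sum_iC_ix_i\succeq0\}$ is normalized if $\sum_{i=1}^nC_i=\mathrm{Id}_k$ and $C_i\succeq0$ for all $i$ (the matrix size $k$ may differ from that of the original representation). *)

(* Defs.v *)
From mathcomp Require Import all_boot all_order all_algebra.
From mathcomp Require Import reals.
Set Implicit Arguments. Unset Strict Implicit. Unset Printing Implicit Defensive.
Import Order.TTheory GRing.Theory Num.Theory.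
Local Open Scope ring_scope.

Definition symmx (R : realType) (k : nat) (A : 'M[R]_k) : Prop := A^T = A.

Definition psd (R : realType) (k : nat) (A : 'M[R]_k) : Prop :=
  symmx A /\ forall v : 'cV[R]_k, 0 <= (v^T *m A *m v) 0 0.

Definition pencil (R : realType) (n k : nat) (C : 'I_n -> 'M[R]_k) (x : 'I_n -> R)
  : 'M[R]_k := \sum_(i < n) x i *: C i.

Definition specCone (R : realType) (n k : nat) (C : 'I_n -> 'M[R]_k)
  : (('I_n -> R) -> Prop) := fun x => psd (pencil C x).

Definition normalized (R : realType) (n k : nat) (C : 'I_n -> 'M[R]_k) : Prop :=
  (forall i, psd (C i)) /\ \sum_(i < n) C i = 1%:M.

(* Main.v *)
Require Import Defs.
From mathcomp Require Import all_boot all_order all_algebra.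
From mathcomp Require Import reals.
From mathcomp Require Import ring lra.
Set Implicit Arguments. Unset Strict Implicit. Unset Printing Implicit Defensive.
Import Order.TTheory GRing.Theory Num.Theory.
Local Open Scope ring_scope.

Section Fact.
Variable R : realType.
Definition qf k (A : 'M[R]_k) (v : 'cV[R]_k) : R := (v^T *m A *m v) 0 0.

Lemma m11E (M : 'M[R]_1) : M = (M 0 0)%:M.
Proof. exact: mx11_scalar. Qed.

Lemma qf_block k (A : 'M[R]_1) (b : 'M[R]_(1,k)) (S' : 'M[R]_k) x y :
  qf (block_mx A b b^T S') (col_mx x y) =
  qf A x + 2 * (x^T *m b *m y) 0 0 + qf S' y.
Proof.
rewrite /qf tr_col_mx mul_row_block mul_row_col !mulmxDl.
have -> : (y^T *m b^T *m x) = (x^T *m b *m y)^T by rewrite !trmx_mul trmxK mulmxA.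
set u := x^T *m b *m y; set p := x^T *m A *m x; set w := y^T *m S' *m y.
rewrite !mxE; ring.
Qed.

Lemma factor k (S : 'M[R]_k) : S^T = S -> (forall v, 0 <= qf S v) ->
  exists r (F : 'M[R]_(r,k)) (P : 'M[R]_(k,r)), S = F^T *m F /\ F *m P = 1%:M.
Proof.
elim: k S => [|k IH] S Ssym Spsd.
  by exists 0%N, 0, 0; split; apply/matrixP => -[].
move: S Ssym Spsd; change k.+1 with (1 + k)%N => S Ssym Spsd.
have HS : S = block_mx (ulsubmx S) (ursubmx S) (dlsubmx S) (drsubmx S).
  by rewrite submxK.
move: (ulsubmx S) (ursubmx S) (dlsubmx S) (drsubmx S) HS => A b c S' HS.
move: Ssym; rewrite HS tr_block_mx => /eq_block_mx [hA hb hc hS'].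
rewrite -hc in HS *; clear hb hc c.
have qS x y : qf S (col_mx x y) = qf A x + 2 * (x^T *m b *m y) 0 0 + qf S' y.
  by rewrite HS qf_block.
set a := A 0 0.
have hAa : A = a%:M by apply: m11E.
have qA t : qf A t%:M = a * t ^+ 2.
  by rewrite /qf hAa tr_scalar_mx mul_scalar_mx mul_mx_scalar !mxE /= mulr1n; ring.
have qb t (y : 'cV_k) : ((t%:M)^T *m b *m y) 0 0 = t * (b *m y) 0 0.
  by rewrite tr_scalar_mx mul_scalar_mx -scalemxAl mxE.
have S'psd : forall y, 0 <= qf S' y.
  move=> y; have := Spsd (col_mx 0 y); rewrite qS; set w := qf S' y.
  by rewrite /qf trmx0 !mul0mx !mxE /= mulr0 !add0r.
have a0 : 0 <= a.
  have := Spsd (col_mx 1%:M 0); rewrite qS qA.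
  by rewrite /qf trmx0 !mulmx0 !mxE /= expr1n mulr1 mulr0 !addr0.
have [az|anz] := eqVneq a 0.
  have bz : b = 0.
    have by0 (y : 'cV_k) : (b *m y) 0 0 = 0.
      apply/eqP/negPn/negP => nz.
      set be := (b *m y) 0 0 in nz *; set ga := qf S' y.
      have := Spsd (col_mx ((-(ga+1)/(2*be))%:M) y); rewrite qS qA qb az -/be -/ga.
      have e : 2 * (-(ga+1)/(2*be) * be) = -(ga+1) by field.
      rewrite e; lra.
    apply/matrixP => i j; rewrite ord1 [RHS]mxE.
    by have := by0 (delta_mx j 0); rewrite -colE mxE.
  have [r [F'' [P'' [hS'' hFP]]]] := IH S' hS' S'psd.
  exists r, (row_mx 0 F''), (col_mx 0 P''); split.
    by rewrite hAa az bz trmx0 tr_row_mx mul_col_row trmx0 !mul0mx mulmx0 -hS'' raddf0.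
  by rewrite mul_row_col mul0mx add0r.
have apos : 0 < a by rewrite lt_def anz a0.
set s := Num.sqrt a.
have spos : 0 < s by rewrite sqrtr_gt0.
have snz : s != 0 by rewrite gt_eqF.
have ss : s * s = a by rewrite -expr2 sqr_sqrtr.
pose S'' := S' - a^-1 *: (b^T *m b).
have hS'' : S''^T = S''.
  by rewrite /S'' raddfB /= linearZ /= trmx_mul trmxK hS'.
have qS'' y : qf S'' y = qf S' y - a^-1 * ((b *m y) 0 0)^+2.
  rewrite /qf /S'' mulmxBr mulmxBl -scalemxAr -scalemxAl.
  have -> : y^T *m (b^T *m b) *m y = (b *m y)^T *m (b *m y) by rewrite trmx_mul !mulmxA.
  rewrite [b *m y]m11E tr_scalar_mx -scalar_mxM.
  set M1 := y^T *m S' *m y; set be := (b *m y) 0 0.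
  by rewrite !mxE /= mulr1n expr2.
have S''psd : forall y, 0 <= qf S'' y.
  move=> y; rewrite qS''; set be := (b *m y) 0 0; set ga := qf S' y.
  have := Spsd (col_mx ((-(a^-1) * be)%:M) y); rewrite qS qA qb -/be -/ga.
  have -> : a * (- a^-1 * be) ^+ 2 + 2 * (- a^-1 * be * be) = - (a^-1 * be^+2) by field.
  lra.
have [r [F'' [P'' [hF'' hFP]]]] := IH S'' hS'' S''psd.
exists (1 + r)%N, (block_mx s%:M (s^-1 *: b) 0 F'').
exists (block_mx (s^-1)%:M (- (a^-1) *: (b *m P'')) 0 P''); split.
  rewrite tr_block_mx mulmx_block !trmx0 !mul0mx !mulmx0 ?addr0 ?add0r tr_scalar_mx.
  rewrite -hF'' /S'' hAa; congr block_mx.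
  - by rewrite -scalar_mxM ss.
  - by rewrite mul_scalar_mx scalerA mulfV // scale1r.
  - by rewrite mul_mx_scalar linearZ /= scalerA mulfV // scale1r.
  - rewrite linearZ /= [(s^-1 *: b)^T]linearZ /= -scalemxAl scalerA -invfM ss.
    by rewrite addrC subrK.
rewrite mulmx_block !mul0mx !mulmx0 ?addr0 ?add0r hFP (scalar_mx_block 1 r).
congr block_mx.
- by rewrite -scalar_mxM mulfV.
- rewrite mul_scalar_mx scalerA -scalemxAl -scalerDl.
  have -> : s * - a^-1 + s^-1 = 0 by rewrite -ss; field.
  by rewrite scale0r.
Qed.

Lemma sos m (u : 'cV[R]_m) : (u^T *m u) 0 0 = 0 -> u = 0.
Proof.
rewrite mxE => h.
have h0 : forall i : 'I_m, true -> 0 <= u^T 0 i * u i 0.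
  by move=> i _; rewrite mxE -expr2 sqr_ge0.
apply/matrixP => i j; rewrite ord1 [RHS]mxE.
have := psumr_eq0P h0 h (i := i) isT.
by rewrite mxE -expr2 => /eqP; rewrite sqrf_eq0 => /eqP.
Qed.

Lemma kerq k (M : 'M[R]_k) z : M^T = M -> (forall v, 0 <= qf M v) ->
  qf M z = 0 -> M *m z = 0.
Proof.
move=> hs hp hz.
have [r [G [P [hG _]]]] := factor hs hp.
have Gz : G *m z = 0.
  apply: sos; move: hz; rewrite /qf hG trmx_mul !mulmxA.
  done.
by rewrite hG -mulmxA Gz mulmx0.
Qed.
End Fact.

Lemma pencil_sym (R : realType) n k (C : 'I_n -> 'M[R]_k) x :
  (forall i, symmx (C i)) -> (pencil C x)^T = pencil C x.
Proof.
move=> Cs; rewrite /pencil linear_sum /=; apply: eq_bigr => i _.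
by rewrite linearZ /= Cs.
Qed.

Theorem lemma12 (R : realType) (n k : nat) (C : 'I_n -> 'M[R]_k) :
  (forall i, symmx (C i)) ->
  (forall x : 'I_n -> R, (forall i, 0 <= x i) -> specCone C x) ->
  exists (k' : nat) (D : 'I_n -> 'M[R]_k'),
    (forall i, symmx (D i)) /\ normalized D /\
    (forall x : 'I_n -> R, specCone C x <-> specCone D x).
Proof.
move=> Csym Hpos.
have Cpsd i : psd (C i).
  have h0 : forall j : 'I_n, 0 <= ((j == i)%:R : R) by move=> j; exact: ler0n.
  have := Hpos _ h0.
  rewrite /specCone /pencil (bigD1 i) //= eqxx scale1r big1 ?addr0 //.
  by move=> j /negbTE ->; rewrite scale0r.
pose S := \sum_i C i.
have qsum (v : 'cV[R]_k) : qf S v = \sum_i qf (C i) v.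
  by rewrite /qf /S mulmx_sumr mulmx_suml summxE.
have Ssym : S^T = S.
  by rewrite /S linear_sum; apply: eq_bigr => i _; apply: Csym.
have Spsd : forall v, 0 <= qf S v.
  by move=> v; rewrite qsum; apply: sumr_ge0 => i _; case: (Cpsd i) => _; apply.
have [r [F [P [hSF hFP]]]] := factor Ssym Spsd.
have Dsym i : symmx (P^T *m C i *m P).
  by rewrite /symmx !trmx_mul trmxK Csym mulmxA.
have qD M w : qf (P^T *m M *m P) w = qf M (P *m w).
  by rewrite /qf trmx_mul !mulmxA.
have penD x : pencil (fun i => P^T *m C i *m P) x = P^T *m pencil C x *m P.
  rewrite /pencil mulmx_sumr mulmx_suml; apply: eq_bigr => i _.
  by rewrite -scalemxAr scalemxAl.
exists r, (fun i => P^T *m C i *m P); split => //; split.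
  split.
    move=> i; split => // v; rewrite -/(qf _ v) qD.
    by case: (Cpsd i) => _; apply.
  rewrite -mulmx_suml -mulmx_sumr -/S hSF.
  have -> : P^T *m (F^T *m F) *m P = (F *m P)^T *m (F *m P).
    by rewrite trmx_mul !mulmxA.
  by rewrite hFP trmx1 mul1mx.
move=> x; rewrite /specCone penD.
set M := pencil C x.
have Msym : M^T = M := pencil_sym x Csym.
have symPMP : symmx (P^T *m M *m P) by rewrite /symmx !trmx_mul trmxK Msym mulmxA.
split.
  move=> [_ hq]; split => // w.
  by have := hq (P *m w); rewrite !trmx_mul !mulmxA.
move=> [_ hq]; split => // u.
set w := F *m u; set z := u - P *m w.
have Sz : S *m z = 0.
  by rewrite /z mulmxBr hSF -!mulmxA [F *m (P *m _)]mulmxA hFP mul1mx subrr.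
have qz : forall i, qf (C i) z = 0.
  have h : \sum_i qf (C i) z = 0 by rewrite -qsum /qf -mulmxA Sz mulmx0 mxE.
  move=> i; apply: (psumr_eq0P _ h) => // j _.
  by case: (Cpsd j) => _; apply.
have Cz i : C i *m z = 0 := kerq (Csym i) (Cpsd i).2 (qz i).
have Mz : M *m z = 0.
  by rewrite /M /pencil mulmx_suml big1 // => i _; rewrite -scalemxAl Cz scaler0.
have zM : z^T *m M = 0 by rewrite -Msym -trmx_mul Mz trmx0.
have -> : u = P *m w + z by rewrite /z addrC subrK.
rewrite raddfD /= -[_ *m M *m z]mulmxA Mz mulmx0 addr0 [(P *m w + z)^T]raddfD /= mulmxDl zM addr0.
by have := hq w; rewrite !trmx_mul !mulmxA.
Qed.
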